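(* Let $X=\{\mathbf{x}_1,\ldots,\mathbf{x}_N\}\subset\mathbb{R}^n$, $\epsilon\ge0$, $\sigma$ a degree-compatible term ordering, and let $(\mathcal{O},G)$ be the output of the ABM algorithm with gradient-weighted normalization (described in the context) on $(X,\epsilon,\sigma)$. Let $P=\{\mathbf{p}_1,\ldots,\mathbf{p}_N\}\subset\mathbb{R}^n$ be perturbations and $X+P=\{\mathbf{x}_1+\mathbf{p}_1,\ldots,\mathbf{x}_N+\mathbf{p}_N\}$, and put $\|P\|_{\max}=\max_i\|\mathbf{p}_i\|$. If $g\in G$ is gradient-weighted unitary, then $$\|g(X+P)\|\le\epsilon+\|P\|_{\max}\deg(g)\sqrt{|X|}+o(\|P\|_{\max})\quad\text{as }\|P\|_{\max}\to0.$$
   Context: For a polynomial $h$, $h(X)=(h(\mathbf{x}_1),\ldots,h(\mathbf{x}_N))^\top$ and $\|\cdot\|$ is the Euclidean norm; $o(\cdot)$ is Landau's little-o. Gradient norm: $\|g\|_{g,X}=\sqrt{\sum_{\mathbf{x}\in X}\|\nabla g(\mathbf{x})\|^2}/\sqrt{\sum_{k=1}^n\deg_k(g)^2}$, and $0$ for constant $g$. Gradient-weighted norm of $g=\sum_ic_it_i$ (distinct terms $t_i$): $\|g\|_{\mathrm{gw},X}=\sqrt{\sum_ic_i^2\|t_i\|_{g,X}^2}$; gradient-weighted unitary means this equals $1$. Border of a set of terms: $\partial\mathcal{O}=(\bigcup_kx_k\mathcal{O})\setminus\mathcal{O}$. ABM algorithm with gradient-weighted normalization, input $(X,\epsilon,\sigma)$: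 initialize $G=\emptyset$, $\mathcal{O}=\{1\}$. For $d=1,2,\ldots$: set $L=\{b\in\partial\mathcal{O}:\deg b=d\}$; if $L=\emptyset$, output $(\mathcal{O},G)$ and stop. Otherwise repeat until $L$ is empty: (S1) take the $\sigma$-smallest $b\in L$ and remove it; (S2) with current $\mathcal{O}=\{o_1,\ldots,o_s\}$, let $M=(b(X)\ o_1(X)\ \cdots\ o_s(X))$, $D=\mathrm{diag}(\|b\|_{\mathrm{gw},X},\|o_1\|_{\mathrm{gw},X},\ldots,\|o_s\|_{\mathrm{gw},X})$, and compute the smallest generalized eigenvalue $\lambda_{\min}$ and eigenvector $\mathbf{v}_{\min}=(v_1,\ldots,v_{s+1})^\top$ of $M^\top M\mathbf{v}=\lambda D^2\mathbf{v}$ with $\mathbf{v}_{\min}^\top D^2\mathbf{v}_{\min}=1$; (S3) if $\sqrt{\lambda_{\min}}\le\epsilon$, add $g=v_1b+v_2o_1+\cdots+v_{s+1}o_s$ to $G$; else add $b$ to $\mathcal{O}$. *)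

(* Defs.v *)
From HB Require Import structures.
From mathcomp Require Import all_boot all_order all_algebra.
From mathcomp Require Import reals.
From mathcomp Require Import mpoly.

Set Implicit Arguments.
Unset Strict Implicit.
Unset Printing Implicit Defensive.

Import Order.TTheory GRing.Theory Num.Theory.
Local Open Scope ring_scope.

Section ABM.
Variables (R : realType) (n N : nat).

(* Terms (monomials) in n variables are the multinomials 'X_{1..n};      *)
(* the term associated with m is the polynomial 'X_[m].                  *)
(* Data points: X j is the point x_{j+1} in R^n, j : 'I_N.               *)

Definition vnorm (k : nat) (v : 'I_k -> R) : R := Num.sqrt (\sum_(i < k) v i ^+ 2).

Definition evalX (X : 'I_N -> 'I_n -> R) (h : {mpoly R[n]}) : 'I_N -> R :=
  fun j => h.@[X j].

Definition deg (h : {mpoly R[n]}) : nat := (msize h).-1.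
Definition degk (h : {mpoly R[n]}) (k : 'I_n) : nat := \max_(m <- msupp h) m k.

Definition gradnorm (X : 'I_N -> 'I_n -> R) (h : {mpoly R[n]}) : R :=
  if deg h == 0%N then 0 else
  Num.sqrt (\sum_(j < N) \sum_(k < n) ((mderiv k h).@[X j]) ^+ 2)
  / Num.sqrt (\sum_(k < n) ((degk h k)%:R) ^+ 2).

Definition gwnorm (X : 'I_N -> 'I_n -> R) (h : {mpoly R[n]}) : R :=
  Num.sqrt (\sum_(m <- msupp h) (h@_m) ^+ 2 * (gradnorm X 'X_[m]) ^+ 2).

Definition gw_unitary (X : 'I_N -> 'I_n -> R) (h : {mpoly R[n]}) : Prop :=
  gwnorm X h = 1.

Definition term_ordering (le : rel 'X_{1..n}) : Prop :=
  [/\ [/\ reflexive le, antisymmetric le, transitive le & total le],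
      (forall m, le 0%MM m) &
      (forall m1 m2 m, le m1 m2 -> le (m1 + m)%MM (m2 + m)%MM)].

Definition degree_compatible (le : rel 'X_{1..n}) : Prop :=
  forall m1 m2, (mdeg m1 < mdeg m2)%N -> le m1 m2 /\ m1 != m2.

Definition in_border (O : seq 'X_{1..n}) (b : 'X_{1..n}) : bool :=
  (b \notin O) && [exists k : 'I_n, has (fun o => b == (o + U_(k))%MM) O].

Definition border_deg_list (le : rel 'X_{1..n}) (O : seq 'X_{1..n}) (d : nat)
    (L : seq 'X_{1..n}) : Prop :=
  [/\ uniq L, sorted le L &
      forall b, (b \in L) = in_border O b && (mdeg b == d)].

Definition Mmat (X : 'I_N -> 'I_n -> R) (cols : seq 'X_{1..n}) : 'M[R]_(N, size cols) :=
  \matrix_(j < N, c < size cols) ('X_[nth 0%MM cols c]).@[X j].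

Definition Dmat (X : 'I_N -> 'I_n -> R) (cols : seq 'X_{1..n}) : 'M[R]_(size cols) :=
  diag_mx (\row_(c < size cols) gwnorm X 'X_[nth 0%MM cols c]).

Definition gen_eigpair (k : nat) (A B : 'M[R]_k) (mu : R) (w : 'cV[R]_k) : Prop :=
  w != 0 /\ A *m w = mu *: (B *m w).

Definition min_gen_eigpair (k : nat) (A B : 'M[R]_k) (lam : R) (v : 'cV[R]_k) : Prop :=
  [/\ A *m v = lam *: (B *m v), v^T *m B *m v = 1%:M &
      forall mu w, gen_eigpair A B mu w -> lam <= mu].

Definition comb (cols : seq 'X_{1..n}) (v : 'cV[R]_(size cols)) : {mpoly R[n]} :=
  \sum_(c < size cols) v c ord0 *: 'X_[nth 0%MM cols c].

Inductive abm_step (X : 'I_N -> 'I_n -> R) (eps : R) (b : 'X_{1..n}) :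
  seq 'X_{1..n} * seq {mpoly R[n]} -> seq 'X_{1..n} * seq {mpoly R[n]} -> Prop :=
| abm_step_G (O : seq 'X_{1..n}) (G : seq {mpoly R[n]}) (lam : R)
    (v : 'cV[R]_(size (b :: O))) :
    min_gen_eigpair ((Mmat X (b :: O))^T *m Mmat X (b :: O))
                    (Dmat X (b :: O) *m Dmat X (b :: O)) lam v ->
    Num.sqrt lam <= eps ->
    abm_step X eps b (O, G) (O, rcons G (comb v))
| abm_step_O (O : seq 'X_{1..n}) (G : seq {mpoly R[n]}) (lam : R)
    (v : 'cV[R]_(size (b :: O))) :
    min_gen_eigpair ((Mmat X (b :: O))^T *m Mmat X (b :: O))
                    (Dmat X (b :: O) *m Dmat X (b :: O)) lam v ->
    eps < Num.sqrt lam ->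
    abm_step X eps b (O, G) (rcons O b, G).

Inductive abm_deg (X : 'I_N -> 'I_n -> R) (eps : R) :
  seq 'X_{1..n} -> seq 'X_{1..n} * seq {mpoly R[n]} ->
  seq 'X_{1..n} * seq {mpoly R[n]} -> Prop :=
| abm_deg_nil s : abm_deg X eps [::] s s
| abm_deg_cons b L s s' s'' :
    abm_step X eps b s s' -> abm_deg X eps L s' s'' -> abm_deg X eps (b :: L) s s''.

Inductive abm_from (X : 'I_N -> 'I_n -> R) (eps : R) (le : rel 'X_{1..n}) :
  nat -> seq 'X_{1..n} * seq {mpoly R[n]} ->
  seq 'X_{1..n} * seq {mpoly R[n]} -> Prop :=
| abm_from_stop d s :
    border_deg_list le s.1 d [::] -> abm_from X eps le d s s
| abm_from_next d s L s' out :
    L != [::] -> border_deg_list le s.1 d L -> abm_deg X eps L s s' ->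
    abm_from X eps le d.+1 s' out -> abm_from X eps le d s out.

Definition abm_output (X : 'I_N -> 'I_n -> R) (eps : R) (le : rel 'X_{1..n})
    (O : seq 'X_{1..n}) (G : seq {mpoly R[n]}) : Prop :=
  abm_from X eps le 1 ([:: 0%MM], [::]) (O, G).

Definition addP (X P : 'I_N -> 'I_n -> R) : 'I_N -> 'I_n -> R :=
  fun j k => X j k + P j k.

Definition Pmax (P : 'I_N -> 'I_n -> R) : R :=
  \big[Num.max/0]_(j < N) vnorm (P j).

End ABM.

(* Main.v *)
Require Import Defs.
From HB Require Import structures.
From mathcomp Require Import all_boot all_order all_algebra.
From mathcomp Require Import reals.
From mathcomp Require Import mpoly.
Set Warnings "-notation-overridden,-ambiguous-paths,-notation-incompatible-prefix".
From mathcomp Require Import lra zify ring.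
Import Order.TTheory GRing.Theory Num.Theory.
Local Open Scope ring_scope.

Section Ineq.
Context {R : realType}.

Lemma sqrt_le_of (x y : R) : 0 <= y -> x <= y ^+ 2 -> Num.sqrt x <= y.
Proof.
move=> y0 hx; have : Num.sqrt x <= Num.sqrt (y ^+ 2).
  by rewrite ler_sqrt // exprn_ge0.
by rewrite sqrtr_sqr ger0_norm.
Qed.

Lemma CS {I : eqType} (r : seq I) (a b : I -> R) :
  (\sum_(i <- r) a i * b i) ^+ 2 <=
  (\sum_(i <- r) a i ^+ 2) * (\sum_(i <- r) b i ^+ 2).
Proof.
set A := \sum_(i <- r) a i ^+ 2; set B := \sum_(i <- r) b i ^+ 2.
set S := \sum_(i <- r) a i * b i.
have B0 : 0 <= B by apply: sumr_ge0 => i _; exact: sqr_ge0.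
have A0 : 0 <= A by apply: sumr_ge0 => i _; exact: sqr_ge0.
have [Bz|Bp] := eqVneq B 0.
  have hb : forall i, i \in r -> b i = 0.
    move=> i ir; apply/eqP; rewrite -sqrf_eq0; apply/eqP.
    move: Bz; rewrite /B => /eqP; rewrite psumr_eq0; last by move=> j _; exact: sqr_ge0.
    move=> H; have := allP H i ir; by move=> /= /eqP.
  have -> : S = 0.
    by rewrite /S big_seq big1 // => i ir; rewrite hb // mulr0.
  by rewrite expr0n /= mulr_ge0.
have Bpos : 0 < B by rewrite lt0r Bp.
have h : 0 <= \sum_(i <- r) (a i * B - b i * S) ^+ 2.
  by apply: sumr_ge0 => i _; exact: sqr_ge0.
have e : \sum_(i <- r) (a i * B - b i * S) ^+ 2 = B * (A * B - S ^+ 2).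
  have -> : \sum_(i <- r) (a i * B - b i * S) ^+ 2 =
     \sum_(i <- r) (B ^+ 2 * a i ^+ 2 - (2 * B * S) * (a i * b i) + S ^+ 2 * b i ^+ 2).
    by apply: eq_bigr => i _; ring.
  rewrite big_split /= sumrB -!mulr_sumr -/A -/B -/S; ring.
move: h; rewrite e pmulr_rge0 // subr_ge0 => h.
exact: h.
Qed.

Definition nrm {I : eqType} (r : seq I) (f : I -> R) := Num.sqrt (\sum_(i <- r) f i ^+ 2).

Lemma nrm_ge0 {I : eqType} r (f : I -> R) : 0 <= nrm r f.
Proof. exact: sqrtr_ge0. Qed.

Lemma sumsq_ge0 {I : eqType} r (f : I -> R) : 0 <= \sum_(i <- r) f i ^+ 2.
Proof. by apply: sumr_ge0 => i _; exact: sqr_ge0. Qed.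

Lemma nrm_sq {I : eqType} r (f : I -> R) : nrm r f ^+ 2 = \sum_(i <- r) f i ^+ 2.
Proof. by rewrite sqr_sqrtr // sumsq_ge0. Qed.

Lemma nrmD {I : eqType} r (f g : I -> R) : nrm r (fun i => f i + g i) <= nrm r f + nrm r g.
Proof.
apply: sqrt_le_of; first by rewrite addr_ge0 // nrm_ge0.
have -> : \sum_(i <- r) (f i + g i) ^+ 2 =
  \sum_(i <- r) f i ^+ 2 + 2 * \sum_(i <- r) f i * g i + \sum_(i <- r) g i ^+ 2.
  rewrite mulr_sumr -!big_split /=; apply: eq_bigr => i _; ring.
rewrite sqrrD !nrm_sq lerD2r lerD2l.
suff : \sum_(i <- r) f i * g i <= nrm r f * nrm r g by move=> h; lra.
have : (\sum_(i <- r) f i * g i) ^+ 2 <= (nrm r f * nrm r g) ^+ 2.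
  by rewrite exprMn !nrm_sq CS.
move=> h; apply: (le_trans (ler_norm _)).
rewrite -sqrtr_sqr; apply: sqrt_le_of => //; by rewrite mulr_ge0 ?nrm_ge0.
Qed.

Lemma nrm_ext {I : eqType} r (f g : I -> R) : (forall i, f i = g i) -> nrm r f = nrm r g.
Proof. by move=> h; rewrite /nrm; under eq_bigr do rewrite h. Qed.

Lemma nrm_sum {I : eqType} (J : Type) r (s : seq J) (F : J -> I -> R) :
  nrm r (fun i => \sum_(m <- s) F m i) <= \sum_(m <- s) nrm r (F m).
Proof.
elim: s => [|m s IH].
  rewrite big_nil (@nrm_ext _ r _ (fun i => 0)); last by move=> i; rewrite big_nil.
  rewrite /nrm.
  by rewrite big1 ?sqrtr0 // => i _; rewrite expr0n.
rewrite big_cons (@nrm_ext _ r _ (fun i => F m i + \sum_(m0 <- s) F m0 i)); last by move=> i; rewrite big_cons.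
by apply: (le_trans (nrmD r (F m) (fun i => \sum_(m0 <- s) F m0 i))); rewrite lerD2l.
Qed.

Lemma nrmZ {I : eqType} r (c : R) (f : I -> R) : nrm r (fun i => c * f i) = `|c| * nrm r f.
Proof.
rewrite /nrm; under eq_bigr do rewrite exprMn.
by rewrite -mulr_sumr sqrtrM ?sqr_ge0 // sqrtr_sqr.
Qed.

Lemma CS_sqrt {I : eqType} (r : seq I) (a b : I -> R) :
  \sum_(i <- r) a i * b i <= nrm r a * nrm r b.
Proof.
apply: (le_trans (ler_norm _)); rewrite -sqrtr_sqr; apply: sqrt_le_of.
  by rewrite mulr_ge0 ?nrm_ge0.
by rewrite exprMn !nrm_sq CS.
Qed.

Lemma sum_sq_nat (I : Type) (r : seq I) (F : I -> nat) :
  (\sum_(i <- r) F i ^ 2 <= (\sum_(i <- r) F i) ^ 2)%N.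
Proof.
elim: r => [|i r IH]; first by rewrite !big_nil.
rewrite !big_cons; nia.
Qed.

End Ineq.

Section Taylor.
Context {R : realType} {n : nat}.
Implicit Types (h : {mpoly R[n]}) (x p : 'I_n -> R).

Definition sq p := \sum_(k < n) p k ^+ 2.
Definition lin h x p := \sum_(k < n) (mderiv k h).@[x] * p k.
Definition rem h x p := h.@[fun k => x k + p k] - h.@[x] - lin h x p.
Definition Kc h x := \sum_(k < n) `|(mderiv k h).@[x]|.
Definition TT h := forall x, exists2 C, 0 <= C &
  forall p, sq p <= 1 -> `|rem h x p| <= C * sq p.

Lemma sq_ge0 p : 0 <= sq p.
Proof. by apply: sumr_ge0 => i _; exact: sqr_ge0. Qed.

Lemma abs_le_sqrt p k : `|p k| <= Num.sqrt (sq p).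
Proof.
rewrite -sqrtr_sqr ler_wsqrtr // /sq (bigD1 k) //= lerDl.
by apply: sumr_ge0 => i _; exact: sqr_ge0.
Qed.

Lemma Kc_ge0 h x : 0 <= Kc h x.
Proof. by apply: sumr_ge0 => i _. Qed.

Lemma lin_bound h x p : `|lin h x p| <= Kc h x * Num.sqrt (sq p).
Proof.
apply: (le_trans (ler_norm_sum _ _ _)); rewrite /Kc mulr_suml.
apply: ler_sum => k _; rewrite normrM ler_wpM2l //; exact: abs_le_sqrt.
Qed.

Lemma TT_C c : TT c%:MP.
Proof.
move=> x; exists 0 => // p _.
rewrite /rem /lin !mevalC big1 ?subrr ?subr0 ?normr0 ?mul0r // => k _.
by rewrite mderivC meval0 mul0r.
Qed.

Lemma TT_0 : TT 0.
Proof. by rewrite -mpolyC0; exact: TT_C. Qed.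

Lemma TT_1 : TT 1.
Proof. by rewrite -mpolyC1; exact: TT_C. Qed.

Lemma mderivXU_eval (i k : 'I_n) x : (mderiv k ('X_i : {mpoly R[n]})).@[x] = (i == k)%:R.
Proof.
rewrite mderivX mevalZ mnm1E; case: eqP => [<-|_]; last by rewrite mul0r.
have -> : (U_(i) - U_(i))%MM = 0%MM by apply/mnmP => j; rewrite mnmBE mnm0E subnn.
by rewrite mpolyX0 meval1 mulr1.
Qed.

Lemma TT_X i : TT 'X_i.
Proof.
move=> x; exists 0 => // p _.
rewrite /rem /lin !mevalXU.
rewrite (bigD1 i) //= big1 => [|k /negbTE ki]; last by rewrite mderivXU_eval eq_sym ki mul0r.
rewrite mderivXU_eval eqxx mul1r addr0.
have -> : x i + p i - x i - p i = 0 by ring.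
by rewrite normr0 mul0r.
Qed.

Lemma TT_D h1 h2 : TT h1 -> TT h2 -> TT (h1 + h2).
Proof.
move=> T1 T2 x; have [C1 C10 H1] := T1 x; have [C2 C20 H2] := T2 x.
exists (C1 + C2); first by rewrite addr_ge0.
move=> p sp.
have -> : rem (h1 + h2) x p = rem h1 x p + rem h2 x p.
  rewrite /rem /lin !mevalD.
  have -> : \sum_(k < n) (mderiv k (h1 + h2)).@[x] * p k =
     \sum_(k < n) (mderiv k h1).@[x] * p k + \sum_(k < n) (mderiv k h2).@[x] * p k.
    by rewrite -big_split; apply: eq_bigr => k _; rewrite mderivD mevalD mulrDl.
  ring.
by apply: (le_trans (ler_normD _ _)); rewrite mulrDl lerD ?H1 ?H2.
Qed.

Lemma TT_Z c h : TT h -> TT (c *: h).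
Proof.
move=> T1 x; have [C1 C10 H1] := T1 x.
exists (`|c| * C1); first by rewrite mulr_ge0.
move=> p sp.
have -> : rem (c *: h) x p = c * rem h x p.
  rewrite /rem /lin !mevalZ.
  have -> : \sum_(k < n) (mderiv k (c *: h)).@[x] * p k =
     c * \sum_(k < n) (mderiv k h).@[x] * p k.
    by rewrite mulr_sumr; apply: eq_bigr => k _; rewrite mderivZ mevalZ mulrA.
  ring.
by rewrite normrM -mulrA ler_wpM2l ?H1.
Qed.

Lemma TT_M h1 h2 : TT h1 -> TT h2 -> TT (h1 * h2).
Proof.
move=> T1 T2 x; have [C1 C10 H1] := T1 x; have [C2 C20 H2] := T2 x.
set a1 := h1.@[x]; set a2 := h2.@[x].
set K1 := Kc h1 x; set K2 := Kc h2 x.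
have K10 : 0 <= K1 by exact: Kc_ge0.
have K20 : 0 <= K2 by exact: Kc_ge0.
exists ((K1 + C1) * (K2 + C2) + `|a1| * C2 + `|a2| * C1).
  by rewrite !addr_ge0 ?mulr_ge0 ?addr_ge0.
move=> p sp.
set t := Num.sqrt (sq p).
have t0 : 0 <= t by exact: sqrtr_ge0.
have t1 : t <= 1 by rewrite -sqrtr1 ler_wsqrtr.
have tt : sq p = t ^+ 2 by rewrite sqr_sqrtr // sq_ge0.
have E1 : h1.@[fun k => x k + p k] = a1 + lin h1 x p + rem h1 x p by rewrite /rem; ring.
have E2 : h2.@[fun k => x k + p k] = a2 + lin h2 x p + rem h2 x p by rewrite /rem; ring.
have EL : lin (h1 * h2) x p = a2 * lin h1 x p + a1 * lin h2 x p.
  rewrite /lin !mulr_sumr -big_split; apply: eq_bigr => k _ /=.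
  rewrite mderivM mevalD !mevalM -/a1 -/a2; ring.
have -> : rem (h1 * h2) x p =
   (lin h1 x p + rem h1 x p) * (lin h2 x p + rem h2 x p) + a1 * rem h2 x p + a2 * rem h1 x p.
  rewrite {1}/rem mevalM E1 E2 EL mevalM -/a1 -/a2; ring.
have B1 : `|lin h1 x p + rem h1 x p| <= (K1 + C1) * t.
  apply: (le_trans (ler_normD _ _)); rewrite mulrDl lerD ?lin_bound //.
  apply: (le_trans (H1 p sp)); rewrite tt ler_wpM2l // expr2 ler_piMr //.
have B2 : `|lin h2 x p + rem h2 x p| <= (K2 + C2) * t.
  apply: (le_trans (ler_normD _ _)); rewrite mulrDl lerD ?lin_bound //.
  apply: (le_trans (H2 p sp)); rewrite tt ler_wpM2l // expr2 ler_piMr //.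
have R1 := H1 p sp; have R2 := H2 p sp.
rewrite tt in R1 R2 *.
apply: (le_trans (ler_normD _ _)); apply: (le_trans (lerD (ler_normD _ _) (lexx _))).
rewrite !normrM.
apply: (@le_trans _ _ ((K1 + C1) * t * ((K2 + C2) * t) + `|a1| * (C2 * t ^+ 2) + `|a2| * (C1 * t ^+ 2))); last by rewrite le_eqVlt; apply/orP; left; apply/eqP; ring.
apply: lerD; first apply: lerD.
- by apply: ler_pM => //; exact: normr_ge0.
- by rewrite ler_wpM2l.
- by rewrite ler_wpM2l.
Qed.

Lemma TT_all h : TT h.
Proof.
rewrite (mpolyE h); apply: (big_ind TT) => //.
- exact: TT_0.
- exact: TT_D.
move=> m _; apply: TT_Z; rewrite mpolyXE_id; apply: (big_ind TT).
- exact: TT_1.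
- exact: TT_M.
move=> i _; elim: (m i) => [|k IH]; first by rewrite expr0; exact: TT_1.
by rewrite exprS; apply: TT_M => //; exact: TT_X.
Qed.

End Taylor.

Section Eig.
Variables (R : realType) (n N : nat) (X : 'I_N -> 'I_n -> R).

Lemma eig_sum {cols : seq 'X_{1..n}} {B : 'M[R]_(size cols)} {lam v} :
  min_gen_eigpair ((Mmat X cols)^T *m Mmat X cols) B lam v ->
  \sum_(j < N) ((Mmat X cols *m v) j ord0) ^+ 2 = lam.
Proof.
case=> H1 H2 _.
have E : ((Mmat X cols *m v)^T *m (Mmat X cols *m v)) = lam%:M.
  rewrite trmx_mul -mulmxA (mulmxA (Mmat X cols)^T) H1 -scalemxAr.
  by rewrite mulmxA H2 scalemx1.
have := congr1 (fun A : 'M[R]_1 => A ord0 ord0) E; rewrite /= !mxE eqxx mulr1n => <-.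
by apply: eq_bigr => j _; rewrite !mxE expr2.
Qed.

Lemma eval_comb (cols : seq 'X_{1..n}) (v : 'cV[R]_(size cols)) j :
  (comb v).@[X j] = (Mmat X cols *m v) j ord0.
Proof.
rewrite /comb raddf_sum /= mxE; apply: eq_bigr => c _.
by rewrite mevalZ mxE mulrC.
Qed.

Lemma msupp_comb (cols : seq 'X_{1..n}) (v : 'cV[R]_(size cols)) :
  {subset msupp (comb v) <= cols}.
Proof.
move=> m; rewrite mcoeff_msupp; apply: contraR => mc; apply/eqP.
rewrite /comb raddf_sum /= big1 // => c _.
rewrite mcoeffZ mcoeffX; case: eqP => [e|]; last by rewrite mulr0.
by move: mc; rewrite -e mem_nth.
Qed.

Lemma vnorm_comb {cols : seq 'X_{1..n}} {lam v} :
  min_gen_eigpair ((Mmat X cols)^T *m Mmat X cols)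
                    (Dmat X cols *m Dmat X cols) lam v ->
  vnorm (evalX X (comb v)) = Num.sqrt lam.
Proof.
move=> H; rewrite /vnorm -(eig_sum H); congr Num.sqrt.
by apply: eq_bigr => j _; rewrite /evalX eval_comb.
Qed.

Lemma lam_ge0 {cols : seq 'X_{1..n}} {B : 'M[R]_(size cols)} {lam v} :
  min_gen_eigpair ((Mmat X cols)^T *m Mmat X cols) B lam v -> 0 <= lam.
Proof.
move=> H; rewrite -(eig_sum H); apply: sumr_ge0 => j _; exact: sqr_ge0.
Qed.

Lemma ker_nz k (M : 'M[R]_(N, k)) : (N < k)%N -> exists w : 'cV[R]_k, w != 0 /\ M *m w = 0.
Proof.
move=> Nk.
have rk : \rank (kermx M^T) != 0%N.
  rewrite mxrank_ker; have := rank_leq_col M^T; lia.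
have Knz : kermx M^T != 0 by apply: contra rk => /eqP ->; rewrite mxrank0.
have : [exists i, [exists l, kermx M^T i l != 0]].
  apply: contraR Knz => /existsPn H; apply/eqP/matrixP => i l.
  by move: (H i) => /existsPn /(_ l) /negbNE /eqP ->; rewrite mxE.
case/existsP => i /existsP [l Hil].
exists (row i (kermx M^T))^T; split.
  apply: contra Hil => /eqP /matrixP /(_ l ord0); rewrite !mxE => ->; exact: eqxx.
apply: trmx_inj; rewrite trmx_mul trmxK -row_mul mulmx_ker.
by apply/matrixP => a b; rewrite !mxE.
Qed.

Definition Qg eps (g : {mpoly R[n]}) := exists cols : seq 'X_{1..n},
  [/\ 0%MM \in cols, (size cols <= N.+1)%N, {subset msupp g <= cols} &
      vnorm (evalX X g) <= eps].

Definition Inv eps (s : seq 'X_{1..n} * seq {mpoly R[n]}) :=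
  [/\ 0%MM \in s.1, (size s.1 <= N)%N & forall g, g \in s.2 -> Qg eps g].

Lemma step_inv eps b s s' : 0 <= eps -> abm_step X eps b s s' -> Inv eps s -> Inv eps s'.
Proof.
move=> e0 [O G lam v H hl | O G lam v H hl] [/= h0 hs hG].
- split => //= g; rewrite mem_rcons in_cons => /orP [/eqP -> | /hG //].
  exists (b :: O); split => //.
  + by rewrite in_cons h0 orbT.
  + exact: msupp_comb.
  + by rewrite (vnorm_comb H).
- split => //=; first by rewrite mem_rcons in_cons h0 orbT.
  rewrite size_rcons ltnNge; apply/negP => hN.
  have [w [wn0 Mw]] : exists w : 'cV[R]_(size (b :: O)), w != 0 /\ Mmat X (b :: O) *m w = 0.
    by apply: ker_nz; rewrite /= ltnS.
  have ge := lam_ge0 H.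
  have le : lam <= 0.
    case: H => _ _ Hmin; apply: (Hmin 0 w); split => //.
    by rewrite -mulmxA Mw mulmx0 scale0r.
  have l0 : lam = 0 by apply/eqP; rewrite eq_le le ge.
  by move: hl; rewrite l0 sqrtr0 => hl; lra.
Qed.

Lemma deg_inv eps L s s' : 0 <= eps -> abm_deg X eps L s s' -> Inv eps s -> Inv eps s'.
Proof.
move=> e0; elim => // b L0 s0 s1 s2 hst _ IH /(@step_inv _ _ _ _ e0 hst); exact: IH.
Qed.

Lemma from_inv eps le d s out : 0 <= eps -> abm_from X eps le d s out -> Inv eps s -> Inv eps out.
Proof.
move=> e0; elim => // d0 s0 L s1 out0 _ _ hd _ IH /(@deg_inv _ _ _ _ e0 hd); exact: IH.
Qed.

Lemma output_Q eps le O G g : (0 < N)%N -> 0 <= eps -> abm_output X eps le O G ->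
  g \in G -> Qg eps g.
Proof.
move=> N0 e0 H gG.
have I0 : Inv eps ([:: 0%MM], [::]) by split => //=; rewrite mem_seq1.
by have [_ _ ] := @from_inv _ _ _ _ _ e0 H I0; move=> /(_ g gG).
Qed.

End Eig.

Section Grad.
Variables (R : realType) (n N : nat) (X : 'I_N -> 'I_n -> R).

Definition rr := index_enum ('I_N * 'I_n)%type.
Definition Wf (m : 'X_{1..n}) (jk : 'I_N * 'I_n) : R :=
  (mderiv jk.2 ('X_[m] : {mpoly R[n]})).@[X jk.1].
Definition Dm (m : 'X_{1..n}) : R := Num.sqrt (\sum_(k < n) ((m k)%:R : R) ^+ 2).

Lemma sum_pair (F : 'I_N -> 'I_n -> R) :
  \sum_(j < N) \sum_(k < n) F j k = \sum_(jk <- rr) F jk.1 jk.2.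
Proof. by rewrite pair_big. Qed.

Lemma gradX m : nrm rr (Wf m) = gradnorm X 'X_[m] * Dm m.
Proof.
rewrite /gradnorm /deg msizeX /=.
have dk : forall k, degk ('X_[m] : {mpoly R[n]}) k = m k.
  by move=> k; rewrite /degk msuppX big_seq1.
case: eqP => [m0|m0].
  have -> : m = 0%MM by apply/eqP; rewrite -mdeg_eq0 m0.
  rewrite mul0r /nrm big1 ?sqrtr0 // => jk _.
  by rewrite /Wf mpolyX0 -mpolyC1 mderivC meval0 expr0n.
case: (boolP [exists k, m k != 0%N]) => [/existsP [k mk]| /existsPn H]; last first.
  exfalso; apply: m0; rewrite mdegE big1 // => k _; exact/eqP/negbNE/H.
have D0 : Dm m != 0.
  rewrite /Dm sqrtr_eq0 -ltNge (bigD1 k) //=; apply: ltr_pwDl.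
    by rewrite exprn_gt0 // ltr0n lt0n.
  by apply: sumr_ge0 => i _; exact: sqr_ge0.
have -> : \sum_(k < n) ((degk ('X_[m] : {mpoly R[n]}) k)%:R : R) ^+ 2 = \sum_(k < n) ((m k)%:R : R) ^+ 2.
  by apply: eq_bigr => i _; rewrite dk.
rewrite -/(Dm m) divfK // sum_pair. by rewrite /nrm /Wf.
Qed.

Lemma deriv_expand (g : {mpoly R[n]}) k x :
  (mderiv k g).@[x] = \sum_(m <- msupp g) g@_m * (mderiv k 'X_[m]).@[x].
Proof.
have E := mpolyE g.
rewrite [in LHS]E (raddf_sum (mderiv k)) (raddf_sum (meval x)).
apply: eq_bigr => m _. transitivity ((g@_m *: mderiv k 'X_[m]).@[x]); last by rewrite mevalZ. congr meval. exact: mderivZ.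
Qed.

Lemma count_nat (s : seq 'X_{1..n}) :
  \sum_(m <- s) ((m != 0%MM)%:R : R) = (count (predC (pred1 0%MM)) s)%:R.
Proof.
elim: s => [|m s IH]; first by rewrite big_nil.
by rewrite big_cons IH /= natrD.
Qed.

Lemma grad_bound (g : {mpoly R[n]}) cols :
  0%MM \in cols -> (size cols <= N.+1)%N -> {subset msupp g <= cols} ->
  gw_unitary X g ->
  nrm rr (fun jk => (mderiv jk.2 g).@[X jk.1]) <= (deg g)%:R * Num.sqrt N%:R.
Proof.
move=> c0 cs sub gw.
set d := deg g.
rewrite (nrm_ext rr _ _ (fun jk => deriv_expand g jk.2 (X jk.1))).
apply: (le_trans (nrm_sum _ rr (msupp g) (fun m jk => g@_m * Wf m jk))).
under eq_bigr do rewrite nrmZ gradX mulrA.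
apply: (le_trans (CS_sqrt _ _ _)).
have -> : nrm (msupp g) (fun m => `|g@_m| * gradnorm X 'X_[m]) = 1.
  rewrite -gw /gwnorm /nrm; congr Num.sqrt; apply: eq_bigr => m _.
  by rewrite exprMn real_normK ?num_real.
rewrite mul1r; apply: sqrt_le_of.
  by rewrite mulr_ge0 ?sqrtr_ge0.
have h1 : forall m, m \in msupp g ->
    Dm m ^+ 2 <= (m != 0%MM)%:R * d%:R ^+ 2.
  move=> m mg; rewrite /Dm sqr_sqrtr; last by apply: sumr_ge0 => i _; exact: sqr_ge0.
  case: eqP => [->|_].
    by rewrite mul0r big1 // => k _; rewrite mnm0E expr0n.
  rewrite mul1r.
  under eq_bigr do rewrite -natrX.
  rewrite -natr_sum -natrX ler_nat.
  apply: (leq_trans (sum_sq_nat _ (index_enum _) (fun i => m i))).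
  rewrite -mdegE; have := msize_mdeg_lt mg; rewrite /d /deg => h.
  rewrite !expnS !expn0 !muln1; apply: leq_mul; lia.
have h2 : \sum_(m <- msupp g) Dm m ^+ 2 <= d%:R ^+ 2 * N%:R.
  rewrite big_seq; apply: (le_trans (ler_sum _ (fun m mg => h1 m mg))).
  rewrite -big_seq -mulr_suml count_nat mulrC ler_wpM2l ?exprn_ge0 // ler_nat.
  have cnt : (count (predC (pred1 0%MM)) cols <= N)%N.
    have := count_predC (pred1 0%MM) cols.
    have : (0 < count (pred1 0%MM) cols)%N by rewrite -has_count has_pred1.
    lia.
  apply: leq_trans cnt; rewrite -!size_filter; apply: uniq_leq_size.
    by rewrite filter_uniq // msupp_uniq.
  by move=> m; rewrite !mem_filter => /andP [-> /sub ->].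
by rewrite exprMn sqr_sqrtr // ler0n.
Qed.

End Grad.

Section Final.
Context {R : realType}.

Lemma bigmax_ge {I : eqType} (s : seq I) (F : I -> R) j :
  j \in s -> F j <= \big[Num.max/0]_(i <- s) F i.
Proof.
elim: s => [//|i s IH]; rewrite in_cons big_cons le_max => /orP [/eqP ->|js].
  by rewrite lexx.
by rewrite IH ?orbT.
Qed.

Lemma bigmax_ge0 {I : Type} (s : seq I) (F : I -> R) :
  0 <= \big[Num.max/0]_(i <- s) F i.
Proof.
elim: s => [|i s IH]; first by rewrite big_nil.
by rewrite big_cons le_max IH orbT.
Qed.

Lemma sq_le (a b : R) : 0 <= a -> a <= b -> a ^+ 2 <= b ^+ 2.
Proof. by move=> a0 ab; rewrite !expr2 ler_pM. Qed.

End Final.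

Lemma unif_taylor (R : realType) (n N : nat) (X : 'I_N -> 'I_n -> R) (g : {mpoly R[n]}) (s : seq 'I_N) :
  exists2 C : R, 0 <= C & forall j, j \in s -> forall p, sq p <= 1 ->
     `|rem g (X j) p| <= C * sq p.
Proof.
elim: s => [|j s [C C0 HC]]; first by exists 0.
have [C1 C10 H1] := TT_all g (X j).
exists (C + C1); first by rewrite addr_ge0.
move=> i; rewrite in_cons => /orP [/eqP -> | /HC H] p sp.
  by apply: (le_trans (H1 p sp)); rewrite ler_wpM2r ?sq_ge0 // lerDr.
by apply: (le_trans (H p sp)); rewrite ler_wpM2r ?sq_ge0 // lerDl.
Qed.

Theorem mainTheorem7 (R : realType) (n N : nat) (X : 'I_N -> 'I_n -> R)
    (eps : R) (sigma : rel 'X_{1..n})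
    (O : seq 'X_{1..n}) (G : seq {mpoly R[n]}) (g : {mpoly R[n]}) :
  injective X -> 0 <= eps ->
  term_ordering sigma -> degree_compatible sigma ->
  abm_output X eps sigma O G ->
  g \in G -> gw_unitary X g ->
  forall eta : R, 0 < eta ->
  exists2 delta : R, 0 < delta &
    forall P : 'I_N -> 'I_n -> R, Pmax P <= delta ->
      vnorm (evalX (addP X P) g)
        <= eps + Pmax P * (deg g)%:R * Num.sqrt N%:R + eta * Pmax P.
Proof.
move=> _ e0 _ _ Hout gG gw eta eta0.
have Pm0 : forall P : 'I_N -> 'I_n -> R, 0 <= Pmax P by move=> P; exact: bigmax_ge0.
have [N0|Npos] := posnP N.
  exists 1 => // P _.
  have -> : vnorm (evalX (addP X P) g) = 0.
    rewrite /vnorm big1 ?sqrtr0 // => i _; exfalso; have := ltn_ord i; lia.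
  by rewrite !addr_ge0 ?mulr_ge0 ?sqrtr_ge0 ?Pm0 // ltW.
have [cols [c0 cs sub hg]] := @output_Q R n N X eps sigma O G g Npos e0 Hout gG.
have Hgrad := @grad_bound R n N X g cols c0 cs sub gw.
have [C C0 HC] := @unif_taylor R n N X g (index_enum 'I_N).
set d := deg g.
set K := C * Num.sqrt N%:R.
have K0 : 0 <= K by rewrite mulr_ge0 ?sqrtr_ge0.
exists (Num.min 1 (eta / (K + 1))).
  by rewrite lt_min ltr01 divr_gt0 // ltr_wpDl.
move=> P; rewrite le_min => /andP [Pm1 Pme].
set Pm := Pmax P.
have Pm0' : 0 <= Pm by exact: Pm0.
have sqP : forall j, sq (P j) <= Pm ^+ 2.
  move=> j; have h : vnorm (P j) <= Pm.
    have := @bigmax_ge R _ (index_enum 'I_N) (fun j => vnorm (P j)) j (mem_index_enum j); exact.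

  have := sq_le _ _ (sqrtr_ge0 _) h; rewrite /vnorm sqr_sqrtr; [by [] | exact: sq_ge0].
have sqP1 : forall j, sq (P j) <= 1.
  move=> j; apply: (le_trans (sqP j)); rewrite expr2; apply: (le_trans (ler_wpM2l Pm0' Pm1)).
  by rewrite mulr1.
set a := fun j => g.@[X j].
set l := fun j => lin g (X j) (P j).
set e := fun j => rem g (X j) (P j).
have -> : vnorm (evalX (addP X P) g) = nrm (index_enum 'I_N) (fun j => (a j + l j) + e j).
  rewrite /vnorm /nrm; congr Num.sqrt; apply: eq_bigr => j _.
  by rewrite /a /l /e /rem /evalX /addP; congr (_ ^+ 2); ring.
have Hlin : nrm (index_enum 'I_N) l <= Pm * d%:R * Num.sqrt N%:R.
  apply: sqrt_le_of; first by rewrite !mulr_ge0 ?sqrtr_ge0.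
  have hl : forall j, l j ^+ 2 <= (\sum_(k < n) ((mderiv k g).@[X j]) ^+ 2) * Pm ^+ 2.
    move=> j; apply: (le_trans (CS (index_enum 'I_n) (fun k => (mderiv k g).@[X j]) (P j))).
    by apply: ler_wpM2l; [exact: sumsq_ge0 | exact: sqP].
  apply: (le_trans (ler_sum _ (fun j _ => hl j))).
  rewrite -mulr_suml (@sum_pair R n N (fun j k => ((mderiv k g).@[X j]) ^+ 2)).
  rewrite -mulrA exprMn mulrC; apply: ler_wpM2l; first exact: exprn_ge0.
  have := sq_le _ _ (nrm_ge0 _ _) Hgrad; rewrite nrm_sq; by [].
have Hrem : nrm (index_enum 'I_N) e <= eta * Pm.
  apply: sqrt_le_of; first by rewrite mulr_ge0 // ltW.
  have he : forall j, e j ^+ 2 <= (C * Pm ^+ 2) ^+ 2.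
    move=> j; rewrite -real_normK ?num_real //; apply: sq_le; first exact: normr_ge0.
    apply: (le_trans (HC j (mem_index_enum j) (P j) (sqP1 j))).
    by rewrite ler_wpM2l.
  apply: (le_trans (ler_sum _ (fun j _ => he j))).
  rewrite sumr_const card_ord.
  have KP : K * Pm <= eta.
    have : Pm * (K + 1) <= eta by rewrite -ler_pdivlMr // ltr_wpDl.
    by move=> h; apply: le_trans h; rewrite mulrDr mulr1 mulrC lerDl.
  have EE : (C * Pm ^+ 2) ^+ 2 *+ N = (K * Pm * Pm) ^+ 2.
    rewrite /K !exprMn sqr_sqrtr ?ler0n // -mulr_natr; ring.
  rewrite EE; apply: sq_le.
    by apply: mulr_ge0; [apply: mulr_ge0|].
  move: KP Pm0'; clear; move=> KP Pm0; nra.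
have h1 : nrm (index_enum 'I_N) (fun j => a j + l j) <= eps + Pm * d%:R * Num.sqrt N%:R.
  by apply: (le_trans (nrmD _ _ _)); apply: lerD.
by apply: (le_trans (nrmD _ _ _)); apply: lerD.
Qed.
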